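(* Let $\vec{G}$ be a DDMOG of order $n$ with $imb(\vec{G})=1$. Then there exists a DDMOG $\vec{G'}$ of order $n+1$ with $imb(\vec{G'})=0$ that contains $\vec{G}$ as an induced subgraph.
   Context: An oriented graph is a finite digraph without loops such that whenever $(u,v)$ is an arc, $(v,u)$ is not. For a vertex $v$, $N^+(v)=\{u:(u,v)\text{ is an arc}\}$, $N^-(v)=\{u:(v,u)\text{ is an arc}\}$, $imb(v)=|N^+(v)|-|N^-(v)|$, and the imbalance of the oriented graph is $imb(\vec{G})=\max_{v}|imb(v)|$. For a labeling $f$, $wt_f(v)=\sum_{u\in N^+(v)}f(u)-\sum_{u\in N^-(v)}f(u)$. A difference distance magic (DDM) labeling of an oriented graph on $n$ vertices is a bijection $f:V\to\{1,\dots,n\}$ with $wt_f(v)=0$ for all $v$; a DDMOG (difference distance magic oriented graph) is an oriented graph admitting a DDM labeling. *)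

(* Defs.v *)
From mathcomp Require Import all_boot all_order all_algebra.
Set Implicit Arguments. Unset Strict Implicit. Unset Printing Implicit Defensive.
Import Order.TTheory GRing.Theory Num.Theory.

(* An oriented graph on a finite vertex type V is given by its arc relation
   [a : rel V]; [a u v] means (u,v) is an arc. *)
Definition oriented (V : finType) (a : rel V) : Prop :=
  (forall v, ~~ a v v) /\ (forall u v, a u v -> ~~ a v u).

Definition Nplus (V : finType) (a : rel V) (v : V) : {set V} := [set u | a u v].
Definition Nminus (V : finType) (a : rel V) (v : V) : {set V} := [set u | a v u].

Definition imbv (V : finType) (a : rel V) (v : V) : int :=
  (#|Nplus a v|%:Z - #|Nminus a v|%:Z)%R.

Definition imbG (V : finType) (a : rel V) : nat := \max_(v : V) `|imbv a v|%N.

Definition wt (V : finType) (a : rel V) (f : V -> nat) (v : V) : int :=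
  (\sum_(u in Nplus a v) (f u)%:Z - \sum_(u in Nminus a v) (f u)%:Z)%R.

Definition labeling (V : finType) (f : V -> nat) : Prop :=
  injective f /\ (forall v, 1 <= f v <= #|V|) /\
  (forall k, 1 <= k <= #|V| -> exists v, f v = k).

Definition DDM_labeling (V : finType) (a : rel V) (f : V -> nat) : Prop :=
  labeling f /\ forall v, wt a f v = 0%R.

Definition DDMOG (V : finType) (a : rel V) : Prop :=
  oriented a /\ exists f : V -> nat, DDM_labeling a f.

Definition induced_sub (V V' : finType) (a : rel V) (a' : rel V') : Prop :=
  exists phi : V -> V', injective phi /\ forall u v, a' (phi u) (phi v) = a u v.

(* Main.v *)
Require Import Defs.
From mathcomp Require Import all_boot all_order all_algebra.
From mathcomp Require Import ring zify.
Import GRing.Theory Num.Theory.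

Set Implicit Arguments. Unset Strict Implicit. Unset Printing Implicit Defensive.
Local Open Scope ring_scope.

Definition D (T : finType) (a : rel T) (g : T -> int) (x : T) : int :=
  \sum_u (((a u x : nat)%:Z - (a x u : nat)%:Z) * g u).

Lemma wtE (T : finType) (a : rel T) (f : T -> nat) v :
  wt a f v = D a (fun u => (f u)%:Z) v.
Proof.
rewrite /wt /D big_mkcond [X in _ - X]big_mkcond /= -sumrB; apply: eq_bigr => u _; rewrite !inE.
by case: (a u v); case: (a v u); rewrite /=; ring.
Qed.

Lemma imbvE (T : finType) (a : rel T) v : imbv a v = D a (fun _ => 1) v.
Proof.
have -> : imbv a v = wt a (fun _ => 1%N) v.
  by rewrite /imbv /wt !sumr_const -!natz.
by rewrite wtE.
Qed.

Lemma sumD (T : finType) (a : rel T) (h : T -> int) :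
  \sum_v D a (fun _ => 1) v * h v = - \sum_v D a h v.
Proof.
rewrite /D exchange_big -sumrN; apply: eq_bigr => v _.
rewrite mulr_suml -sumrN; apply: eq_bigr => u _.
by case: (a u v); case: (a v u); rewrite /=; ring.
Qed.

Lemma imb3 (z : int) : (`|z|%N <= 1)%N -> ((z == 1 : nat)%:Z - (z == -1 : nat)%:Z = z).
Proof. by case: z => [[|[|n]]|[|n]]. Qed.

Definition hopt (V : finType) (i : 'I_#|V|.+1) : option V :=
  if unlift ord0 i is Some j then Some (enum_val j) else None.
Definition hinv (V : finType) (o : option V) : 'I_#|V|.+1 :=
  if o is Some v then lift ord0 (enum_rank v) else ord0.

Lemma hK V : cancel (@hopt V) (@hinv V).
Proof.
move=> i; rewrite /hopt; case: unliftP => [j ->|->] /=; last by [].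
by rewrite enum_valK.
Qed.

Lemma hinvK V : cancel (@hinv V) (@hopt V).
Proof.
case=> [v|] /=; rewrite /hopt ?liftK ?unlift_none ?enum_rankK //.
Qed.

Lemma sumW (V : finType) (F : option V -> int) :
  \sum_(i < #|V|.+1) F (hopt i) = F None + \sum_v F (Some v).
Proof.
rewrite big_ord_recl /hopt unlift_none; congr (_ + _).
rewrite (reindex (@enum_rank V)) /=; last first.
  by apply: onW_bij; exists enum_val; [apply: enum_rankK|apply: enum_valK].
by apply: eq_bigr => v _; rewrite liftK enum_rankK.
Qed.


Theorem theorem1 (V : finType) (a : rel V) :
  DDMOG a -> imbG a = 1%N ->
  exists a' : rel 'I_(#|V|).+1,
    DDMOG a' /\ imbG a' = 0%N /\ induced_sub a a'.
Proof.
move=> [Hor [f [[finj [frange fsurj]] fwt]]] Himb.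
have imb1 : forall v, (`|imbv a v| <= 1)%N.
  by move=> v; rewrite -Himb /imbG; apply: (@leq_bigmax V (fun v => `|imbv a v|%N)).
pose a' : rel (option V) := fun o1 o2 => match o1, o2 with
  | Some u, Some v => a u v
  | Some u, None => imbv a u == 1%R
  | None, Some v => imbv a v == (-1)%R
  | None, None => false end.
pose a'' : rel 'I_#|V|.+1 := fun x y => a' (hopt x) (hopt y).
pose G (k : V -> int) (o : option V) : int := if o is Some v then (k v + 1)%R else 1%R.
have key : forall k, (forall v, D a k v = 0%R) ->
    forall x, D a'' (fun u => G k (hopt u)) x = 0%R.
  move=> k Hk x; rewrite /D /a''.
  rewrite (sumW (fun o => (((a' o (hopt x) : nat)%:Z - (a' (hopt x) o : nat)%:Z) * G k o)%R)).
  case: (hopt x) => [y|] /=.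
    have -> : (\sum_v ((a v y : nat)%:Z - (a y v : nat)%:Z) * (k v + 1))%R
        = (D a k y + D a (fun _ => 1) y)%R.
      by rewrite /D -big_split /=; apply: eq_bigr => v _; ring.
    rewrite Hk -imbvE; have := imb3 (imb1 y); lia.
  have -> : (\sum_v ((imbv a v == 1%R : nat)%:Z - (imbv a v == (-1)%R : nat)%:Z) * (k v + 1))%R
      = (\sum_v D a (fun _ => 1) v * k v + \sum_v D a (fun _ => 1) v * 1)%R.
    by rewrite -big_split /=; apply: eq_bigr => v _; rewrite imb3 // imbvE; ring.
  rewrite sumD big1 ?oppr0 ?add0r; last by move=> v _; rewrite Hk.
  have := sumD a (fun _ => 1%R).
  have -> : (\sum_v D a (fun _ => 1) v * 1 = \sum_v D a (fun _ => 1) v)%R.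
    by apply: eq_bigr => v _; rewrite mulr1.
  lia.
exists a''; split; [split|split].
- split=> [x|x y]; rewrite /a''.
    by case: (hopt x) => [v|] //=; apply: Hor.1.
  case: (hopt x) => [u|]; case: (hopt y) => [v|] //=; first by apply: Hor.2.
    by move/eqP->.
  by move/eqP->.
- pose g'' (i : 'I_#|V|.+1) := match hopt i with Some v => (f v).+1 | None => 1%N end.
  exists g''; split; [split; [|split]|].
  + move=> i j; rewrite /g'' => E; apply: (can_inj (@hK V)); move: E.
    case: (hopt i) => [u|]; case: (hopt j) => [v|] //=.
    * by case=> /finj ->.
    * by case=> E; move: (frange u); rewrite E.
    * by case=> E; move: (frange v); rewrite -E.
  + move=> i; rewrite card_ord /g''; case: (hopt i) => [v|] //.
    by move: (frange v); lia.
  + move=> k; rewrite card_ord => Hk.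
    have [->|k1] := eqVneq k 1%N.
      by exists ord0; rewrite /g'' /hopt unlift_none.
    have [|v fv] := fsurj k.-1; first lia.
    by exists (hinv (Some v)); rewrite /g'' hinvK fv; lia.
  + move=> x; rewrite wtE.
    have -> : D a'' (fun u => (g'' u)%:Z) x = D a'' (fun u => G (fun v => (f v)%:Z) (hopt u)) x.
      rewrite /D; apply: eq_bigr => u _; rewrite /g'' /G; case: (hopt u) => // v.
      congr (_ * _)%R; lia.
    by apply: key => v; rewrite -wtE.
- rewrite /imbG big1 // => x _; rewrite imbvE.
  have -> : D a'' (fun _ => 1%R) x = D a'' (fun u => G (fun _ => 0%R) (hopt u)) x.
    by rewrite /D; apply: eq_bigr => u _; rewrite /G; case: (hopt u).
  rewrite key // => v; rewrite /D big1 // => u _; by rewrite mulr0.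
- exists (fun v => hinv (Some v)); split.
    by move=> u v E; case: (can_inj (@hinvK V) E).
  by move=> u v; rewrite /a'' !hinvK.
Qed.
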